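(* Let $m\ge3$, $p\in[m]$, and let $\lambda_1,\lambda_2$ be $\mathbb{Z}_2$-characteristic maps over $P_m$. Then the D-J classes of $\lambda_1$ and $\lambda_2$ are $p$-adjacent if and only if $\operatorname{supp}_{\lambda_1}p=\operatorname{supp}_{\lambda_2}p$.
   Context: $P_m$ is the simplicial complex on $[m]$ with facets $\{i,i+1\}$ (mod $m$). For a pure $(n-1)$-dimensional simplicial complex $K$ on a vertex set $V$, a $\mathbb{Z}_2$-characteristic map over $K$ is a map $\lambda\colon V\to\mathbb{Z}_2^n$ such that the images of the vertices of every face are linearly independent; $\lambda,\lambda'$ are D-J equivalent if $\lambda'=\phi\circ\lambda$ with $\phi\in GL(n,\mathbb{Z}_2)$. For a face $\sigma$ of $K$, the projection $\operatorname{proj}_\sigma\lambda$ is the characteristic map over the link $\operatorname{lk}_K\sigma$ given by $w\mapsto[\lambda(w)]\in\mathbb{Z}_2^n/\langle\lambda(v):v\in\sigma\rangle\cong\mathbb{Z}_2^{n-|\sigma|}$ (well defined up to D-J equivalence). The wedge $\mathrm{wed}_pK$ is the simplicial complex on $(V\setminus\{p\})\cup\{p_1,p_2\}$ whose minimal non-faces are the minimal non-faces of $K$ not containing $p$, together with $(\tau\setminus\{p\})\cup\{p_1,p_2\}$ for each minimal non-face $\tau\ni p$ of $K$. The link of $p_2$ (resp. $p_1$) in $\mathrm{wed}_pK$ is identified with $K$ via $p_1\mapsto p$ (resp. $p_2\mapsto p$) and identity on other vertices. Two D-J classes $\lambda_1,\lambda_2$ over $K$ are $p$-adjacent if there is a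 $\mathbb{Z}_2$-characteristic map $\Lambda$ over $\mathrm{wed}_pK$ with $\operatorname{proj}_{p_2}\Lambda\simeq\lambda_1$ and $\operatorname{proj}_{p_1}\Lambda\simeq\lambda_2$ (D-J equivalent); $\lambda_1=\lambda_2$ is allowed. For a characteristic map $\lambda$ over $P_m$, $\operatorname{supp}_\lambda p=\lambda^{-1}(\lambda(p))$, which depends only on the D-J class. *)

(* Defs.v *)
From HB Require Import structures.
From mathcomp Require Import all_boot all_order all_algebra.
Set Implicit Arguments. Unset Strict Implicit. Unset Printing Implicit Defensive.
Import GRing.Theory.
Local Open Scope ring_scope.

(* A simplicial complex on a finite vertex type V is given by its set of
   faces, as a boolean predicate on {set V}. *)

(* lambda is a Z_2-characteristic map over K: images of the vertices of every
   face are linearly independent (free as a sequence, hence also pairwise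
   distinct). *)
Definition char_map (V : finType) (n : nat) (K : pred {set V})
    (lam : V -> 'rV['F_2]_n) : Prop :=
  forall s : {set V}, K s -> free [seq lam v | v <- enum s].

(* D-J equivalence: lam' = phi o lam with phi in GL(n, Z_2)
   (row-vector convention: phi acts by right multiplication by A). *)
Definition DJ_equiv (V : finType) (n : nat) (lam lam' : V -> 'rV['F_2]_n) : Prop :=
  exists A : 'M['F_2]_n, A \in unitmx /\ forall v, lam' v = lam v *m A.

Definition face_mx (W : finType) (N : nat) (Lam : W -> 'rV['F_2]_N)
    (s : {set W}) : 'M['F_2]_(size (enum s), N) :=
  \matrix_(i < size (enum s)) nth 0 [seq Lam v | v <- enum s] i.

(* mu is (a representative of) proj_s Lam, where the vertex set of the link of
   s is identified with V via iota : mu w = [Lam (iota w)] in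
   Z_2^N / <Lam v : v in s>, transported to Z_2^k by a linear isomorphism. *)
Definition proj_rep (W V : finType) (N k : nat) (Lam : W -> 'rV['F_2]_N)
    (s : {set W}) (iota : V -> W) (mu : V -> 'rV['F_2]_k) : Prop :=
  exists phi : 'M['F_2]_(N, k),
    [/\ \rank phi = k,
        (kermx phi == face_mx Lam s)%MS
      & forall w, mu w = Lam (iota w) *m phi].

Definition min_nonface (V : finType) (K : pred {set V}) (t : {set V}) : bool :=
  ~~ K t && [forall v in t, K (t :\ v)].

(* Wedge wed_p K, on the vertex type option V:
   Some v  <-> v  (v <> p),   Some p <-> p1,   None <-> p2. *)
Definition p1 (V : finType) (p : V) : option V := Some p.
Definition p2 (V : finType) : option V := None.

Definition wedge_mnf (V : finType) (p : V) (t : {set V}) : {set option V} :=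
  if p \in t then (Some @: (t :\ p)) :|: [set p1 p; p2 V]
  else Some @: t.

Definition wedge (V : finType) (K : pred {set V}) (p : V) : pred {set option V} :=
  fun s => [forall t : {set V}, min_nonface K t ==> ~~ (wedge_mnf p t \subset s)].

(* identification of lk p2 with K (p1 |-> p) and of lk p1 with K (p2 |-> p) *)
Definition iota_lk_p2 (V : finType) (p : V) (v : V) : option V := Some v.
Definition iota_lk_p1 (V : finType) (p : V) (v : V) : option V :=
  if v == p then p2 V else Some v.

Definition p_adjacent (V : finType) (n : nat) (K : pred {set V}) (p : V)
    (lam1 lam2 : V -> 'rV['F_2]_n) : Prop :=
  exists Lam : option V -> 'rV['F_2]_n.+1,
    [/\ char_map (wedge K p) Lam,
        (exists mu, proj_rep Lam [set p2 V] (iota_lk_p2 p) mu /\ DJ_equiv mu lam1)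
      & (exists mu, proj_rep Lam [set p1 p] (iota_lk_p1 p) mu /\ DJ_equiv mu lam2)].

Definition Pm (m : nat) : pred {set 'I_m} :=
  fun s => (#|s| <= 1)%N || [exists i : 'I_m, s \subset [set i; ordS i]].

Definition supp (V : finType) (n : nat) (lam : V -> 'rV['F_2]_n) (p : V) : {set V} :=
  [set v | lam v == lam p].
Arguments Pm m : clear implicits.

(* Main.v *)
Require Import Defs.
From HB Require Import structures.
From mathcomp Require Import all_boot all_order all_algebra.
Set Implicit Arguments. Unset Strict Implicit. Unset Printing Implicit Defensive.
Import GRing.Theory.
Local Open Scope ring_scope.

Local Open Scope ring_scope.
Lemma F2_cases (x : 'F_2) : x = 0 \/ x = 1.
Proof. case: x => [[|[|//]]] H; [left|right]; exact: val_inj. Qed.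
Lemma F2_11 : (1 + 1 : 'F_2) = 0.
Proof. by apply: val_inj. Qed.
Lemma F2_dbl (x : 'F_2) : x + x = 0.
Proof. by case: (F2_cases x) => ->; rewrite ?addr0 ?F2_11. Qed.
Lemma mx_dbl a b (u : 'M['F_2]_(a,b)) : u + u = 0.
Proof. by apply/matrixP => i j; rewrite !mxE F2_dbl. Qed.
Lemma mx_subE a b (u v : 'M['F_2]_(a,b)) : u - v = u + v.
Proof. by apply/eqP; rewrite subr_eq -addrA mx_dbl addr0. Qed.
Lemma mx_addI a b (u v : 'M['F_2]_(a,b)) : u + v = 0 -> u = v.
Proof. by move=> h; rewrite -[u]addr0 -(mx_dbl v) addrA h add0r. Qed.

Lemma span1P N (x y : 'rV['F_2]_N) : x \in <<[:: y]>>%VS -> x = 0 \/ x = y.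
Proof.
rewrite span_seq1 => /vlineP[k ->]; case: (F2_cases k) => ->; [left|right];
  by rewrite ?scale0r ?scale1r.
Qed.

Lemma span2P N (x y z : 'rV['F_2]_N) : x \in <<[:: y; z]>>%VS ->
  exists a b : 'F_2, x = a *: y + b *: z.
Proof.
rewrite span_cons span_seq1 => /memv_addP[u /vlineP[a ->] [v /vlineP[b ->] ->]].
by exists a, b.
Qed.

Lemma free3_proj N k (x y z : 'rV['F_2]_N) (P : 'M['F_2]_(N, k)) :
  x != 0 -> x *m P = 0 -> free [:: y *m P; z *m P] -> free [:: x; y; z].
Proof.
move=> x0 xP; rewrite !free_cons nil_free !andbT span_nil !memv0.
case/andP=> hy hz; have z0 : z != 0 by apply: contraNneq hz => ->; rewrite mul0mx.
apply/and3P; split=> //.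
  apply/negP => /span2P[a [b ex]]; move: xP x0; rewrite ex mulmxDl -!scalemxAl.
  case: (F2_cases a) => ->; case: (F2_cases b) => ->;
    rewrite ?scale0r ?scale1r ?add0r ?addr0.
  - by rewrite eqxx.
  - by move=> h; move: hz; rewrite h eqxx.
  - by move=> h; move: hy; rewrite h mem0v.
  - by move/mx_addI => h; move: hy; rewrite h memv_span ?mem_head.
apply/negP => /span1P[] h; move: hy.
  by rewrite h mul0mx mem0v.
by rewrite h memv_span ?mem_head.
by rewrite span_nil memv0 nil_free z0.
Qed.

Lemma free2_of N (y z : 'rV['F_2]_N) : y != 0 -> z != 0 -> y != z -> free [:: y; z].
Proof.
move=> y0 z0 yz; rewrite free_cons seq1_free z0 andbT.
by apply/negP => /span1P[] /eqP; apply/negP.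
Qed.

Lemma F2sq_fact (y z c : 'rV['F_2]_2) : y != 0 -> z != 0 -> c != 0 -> y != c -> z != c ->
  y = z \/ y + z = c.
Proof.
move=> y0 z0 c0 yc zc; case: (eqVneq y z) => [->|yz]; [by left|right].
have hb : basis_of fullv [:: y; z].
  by rewrite basisEfree free2_of // subvf dimvf /dim /=.
move: (memvf c); rewrite -(span_basis hb) => /span2P[a [b ec]].
move: yc zc c0; rewrite ec.
case: (F2_cases a) => ->; case: (F2_cases b) => ->;
    rewrite ?scale0r ?scale1r ?add0r ?addr0 ?eqxx //.
Qed.

Lemma free_sub (W : finType) N (Lam : W -> 'rV['F_2]_N) (s T : {set W}) :
  s \subset T -> free [seq Lam x | x <- enum T] -> free [seq Lam x | x <- enum s].
Proof.
move=> sT hT.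
have P1 : perm_eq (enum s) (filter (mem s) (enum T)).
  apply: uniq_perm; [exact: enum_uniq | exact/filter_uniq/enum_uniq|].
  move=> x; rewrite mem_enum mem_filter mem_enum.
  rewrite -[mem s x]/(x \in s); case: (boolP (x \in s)) => xs //=; by rewrite (subsetP sT x xs).
rewrite (perm_free (perm_map Lam P1)).
apply: (@catl_free _ _ [seq Lam x | x <- filter (predC (mem s)) (enum T)]).
have P2 : perm_eq (filter (mem s) (enum T) ++ filter (predC (mem s)) (enum T)) (enum T).
  by apply/permPl; apply: perm_filterC.
by rewrite -map_cat (perm_free (perm_map Lam P2)).
Qed.

Lemma perm3 (W : finType) (A B C : W) : uniq [:: A; B; C] ->
  perm_eq (enum [set A; B; C]) [:: A; B; C].
Proof.
move=> u; apply: uniq_perm; [exact: enum_uniq | exact: u |].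
by move=> x; rewrite mem_enum !inE ?orbA.
Qed.

Lemma perm2 (W : finType) (A B : W) : A != B ->
  perm_eq (enum [set A; B]) [:: A; B].
Proof.
move=> u; apply: uniq_perm; first exact: enum_uniq.
  by rewrite /= inE u.
by move=> x; rewrite mem_enum !inE ?orbA.
Qed.

Lemma face_mx1 (W : finType) N (Lam : W -> 'rV['F_2]_N) w :
  (face_mx Lam [set w] == Lam w)%MS.
Proof.
rewrite /face_mx enum_set1.
have -> : (\matrix_(i < size [:: w]) nth 0 [seq Lam v | v <- [:: w]] i) = Lam w.
  by apply/matrixP => i j; rewrite !mxE (ord1 i).
by apply/eqmxP.
Qed.

Lemma ker_two N k (phi : 'M['F_2]_(N,k)) (b u : 'rV['F_2]_N) :
  (kermx phi :=: b)%MS -> (u *m phi == 0) = (u == 0) || (u == b).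
Proof.
move=> hK; rewrite -sub_kermx hK; apply/sub_rVP/orP => [[a ->]|[]/eqP->].
- by case: (F2_cases a) => ->; [left|right]; rewrite ?scale0r ?scale1r.
- by exists 0; rewrite scale0r.
- by exists 1; rewrite scale1r.
Qed.
Lemma unit11 (k : 'M['F_2]_1) : k \in unitmx -> k = 1%:M.
Proof.
rewrite unitmxE det_mx11 unitfE [k]mx11_scalar mxE eqxx /= mulr1n.
by case: (F2_cases (k 0 0)) => ->; rewrite ?eqxx.
Qed.

Lemma nz_ebase (c : 'rV['F_2]_2) : c != 0 ->
  c = pid_mx 1 *m row_ebase c.
Proof.
move=> c0; rewrite -[c in LHS]mulmx_ebase (unit11 (col_ebase_unit c)) mul1mx.
by rewrite rank_rV c0.
Qed.

Lemma exM (c1 c2 : 'rV['F_2]_2) : c1 != 0 -> c2 != 0 ->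
  exists M : 'M['F_2]_2, M \in unitmx /\ c1 *m M = c2.
Proof.
move=> c10 c20; exists (invmx (row_ebase c1) *m row_ebase c2); split.
  by rewrite unitmx_mul unitmx_inv !row_ebase_unit.
rewrite {1}(nz_ebase c10) mulmxA -(mulmxA _ _ (invmx _)) mulmxV ?row_ebase_unit //.
by rewrite mulmx1 -nz_ebase.
Qed.

Lemma ex_mnf (V : finType) (K : pred {set V}) (t : {set V}) :
  ~~ K t -> exists2 t' : {set V}, t' \subset t & min_nonface K t'.
Proof.
have [n] := ubnP #|t|; elim: n t => // n IH t; rewrite ltnS => tn nKt.
case: (boolP [forall v in t, K (t :\ v)]) => h.
  by exists t => //; rewrite /min_nonface nKt h.
case/forall_inPn: h => v vt nKv.
have ct : (#|t :\ v| < n)%N.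
  by move: tn; rewrite (cardsD1 v t) vt add1n.
have [t' st' mt'] := IH _ ct nKv.
by exists t' => //; apply: subset_trans st' (subD1set _ _).
Qed.

Lemma wedge_mnf_mono (V : finType) (p : V) (t' t : {set V}) :
  t' \subset t -> wedge_mnf p t' \subset wedge_mnf p t.
Proof.
move=> st; rewrite /wedge_mnf; case: ifP => pt'; case: ifP => pt.
- by apply: setSU; apply: imsetS; apply: setSD.
- by rewrite (subsetP st _ pt') in pt.
- apply: subset_trans (subsetUl _ _); apply: imsetS; apply/subsetP => x xt'.
  rewrite !inE (subsetP st _ xt') andbT; apply: contraFneq pt' => <-; exact: xt'.
- exact: imsetS.
Qed.

Lemma wedge_nf (V : finType) (K : pred {set V}) (p : V) s t :
  wedge K p s -> ~~ K t -> ~~ (wedge_mnf p t \subset s).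
Proof.
move=> ws nKt; have [t' st' mt'] := ex_mnf nKt.
have := forallP ws t'; rewrite mt' /=; apply: contra => h.
exact: subset_trans (wedge_mnf_mono p st') h.
Qed.

Lemma Pm_shape m (p : 'I_m) T : Pm m T -> exists i, T \subset [set i; ordS i].
Proof.
case/orP => [h|/existsP[i hi]]; last by exists i.
case: (set_0Vmem T) => [->|[j jT]]; first by exists p; exact: sub0set.
exists j; apply/subsetP => x xT; rewrite !inE.
by rewrite (card_le1_eqP h x j xT jT) eqxx.
Qed.

Lemma Some_eq (V : eqType) (x y : V) : (Some x == Some y) = (x == y).
Proof. by []. Qed.

Lemma wedge_good m (p : 'I_m) s : wedge (Pm m) p s ->
  exists i, s \subset [set None; Some i; Some (ordS i)] \/
    [/\ p != i, p != ordS i & s \subset [set Some p; Some i; Some (ordS i)]].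
Proof.
move=> ws; set T := [set v | Some v \in s].
have sub i : T \subset [set i; ordS i] -> s \subset [set None; Some i; Some (ordS i)].
  move=> hi; apply/subsetP => -[v|] xs; rewrite !inE ?Some_eq //.
  have : v \in T by rewrite inE.
  by move/(subsetP hi); rewrite !inE => ->; rewrite ?orbT.
case: (boolP ((Some p \in s) && (None \notin s))) => [/andP[ps ns]|hc].
  have : Pm m (T :\ p).
    apply/negPn/negP => nf; move: (wedge_nf ws nf).
    rewrite /wedge_mnf setD11; apply/negP/negPn.
    by apply/subsetP => x /imsetP[v]; rewrite !inE => /andP[_ vs] ->.
  case/(Pm_shape p) => i hi; exists i.
  case: (boolP ((p == i) || (p == ordS i))) => hpi.
    left; apply: sub; apply/subsetP => v vT.
    case: (eqVneq v p) => [->|vp]; first by rewrite !inE.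
    by apply: (subsetP hi); rewrite in_setD1 vp vT.
  right; rewrite negb_or in hpi; case/andP: hpi => h1 h2; split => //.
  apply/subsetP => -[v|] xs; last by rewrite xs in ns.
  rewrite !inE !Some_eq; case: (eqVneq v p) => [->|vp] //=.
  have : v \in T :\ p by rewrite !inE vp xs.
  by move/(subsetP hi); rewrite !inE => ->; rewrite ?orbT.
have : Pm m T.
  apply/negPn/negP => nf; move: (wedge_nf ws nf); apply/negP/negPn.
  rewrite /wedge_mnf; case: ifP => pT.
    apply/subsetP => x; rewrite !inE; case/orP => [/imsetP[v]|/orP[]/eqP->].
    - by rewrite !inE => /andP[_ vs] ->.
    - by rewrite inE in pT.
    - by move: hc; rewrite inE in pT; rewrite pT /= negbK.
  by apply/subsetP => x /imsetP[v]; rewrite !inE => vs ->.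
by case/(Pm_shape p) => i hi; exists i; left; apply: sub.
Qed.

Lemma wedge2 m (p v : 'I_m) : v != p ->
  wedge (Pm m) p [set Some p; Some v] /\ wedge (Pm m) p [set None; Some v].
Proof.
move=> vp.
have key t : min_nonface (Pm m) t -> (1 < #|t|)%N.
  by case/andP => nf _; move: nf; rewrite /Pm negb_or -ltnNge => /andP[].
split; apply/forallP => t; apply/implyP => /key ct; rewrite /wedge_mnf;
  case: ifP => pt.
- apply/negP => /subsetP/(_ None); rewrite !inE /p2 eqxx => /(_ (orbT _)).
  by [].
- apply/negP => h; have : t \subset [set v].
    apply/subsetP => x xt; have := subsetP h (Some x) (imset_f _ xt).
    rewrite !inE !Some_eq; case/orP => /eqP ex //; by rewrite ex pt in xt.
  by move/subset_leq_card; rewrite cards1 leqNgt ct.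
- apply/negP => /subsetP/(_ (Some p)); rewrite !inE /p1 eqxx => /(_ (orbT _)).
  by rewrite Some_eq (eq_sym p v) (negbTE vp).
- apply/negP => h; have : t \subset [set v].
    apply/subsetP => x xt; have := subsetP h (Some x) (imset_f _ xt).
    by rewrite !inE !Some_eq.
  by move/subset_leq_card; rewrite cards1 leqNgt ct.
Qed.

Lemma ordS_neq m (i : 'I_m) : (1 < m)%N -> i != ordS i.
Proof.
move=> m1; apply/eqP => /(congr1 val) /= h; have lt := ltn_ord i; move: h.
case: (ltnP i.+1 m) => [lt2|ge].
  by rewrite modn_small // => h; exact: (n_Sn i h).
have em : i.+1 = m by apply/eqP; rewrite eqn_leq lt ge.
have h1 : (i.+1 %% m = 0)%N by rewrite -[X in (_ %% X)%N]em modnn.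
rewrite h1 => h0; move: m1; rewrite -em h0.
by [].
Qed.

Lemma DJ_supp (V : finType) n (mu lam : V -> 'rV['F_2]_n) p :
  DJ_equiv mu lam -> supp lam p = supp mu p.
Proof.
case=> A [hA e]; apply/setP => v; rewrite !inE !e.
by rewrite (inj_eq (can_inj (mulmxK hA))).
Qed.

Lemma add_eqF2 N (x a b : 'rV['F_2]_N) : (x + a == b) = (x == b + a).
Proof.
apply/eqP/eqP => h; first by rewrite -h -addrA mx_dbl addr0.
by rewrite h -addrA mx_dbl addr0.
Qed.

Lemma set2_neq (W : finType) N (Lam : W -> 'rV['F_2]_N) A B : A != B ->
  free [seq Lam x | x <- enum [set A; B]] -> Lam A != Lam B.
Proof.
move=> AB; rewrite (perm_free (perm_map Lam (perm2 AB))) => /free_uniq /=.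
by rewrite inE andbT.
Qed.

Lemma cm_nz m (lam : 'I_m -> 'rV['F_2]_2) : char_map (Pm m) lam -> forall v, lam v != 0.
Proof.
move=> cm v; have := cm [set v]; rewrite enum_set1 /= seq1_free; apply.
by rewrite /Pm cards1.
Qed.

Lemma cm_adj m (lam : 'I_m -> 'rV['F_2]_2) : (1 < m)%N -> char_map (Pm m) lam ->
  forall i, free [:: lam i; lam (ordS i)].
Proof.
move=> m1 cm i; have := cm [set i; ordS i].
rewrite (perm_free (perm_map lam (perm2 (ordS_neq i m1)))); apply.
by apply/orP; right; apply/existsP; exists i.
Qed.

Lemma rank_col (M : 'M['F_2]_2) (c : 'rV['F_2]_2) : M \in unitmx ->
  \rank (col_mx M c : 'M_(3, 2)) = 2%N.
Proof.
move=> hM; apply/eqP; rewrite eqn_leq rank_leq_col /= -{1}(mxrank_unit hM).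
apply: mxrankS; have := submx_refl (col_mx M c); rewrite col_mx_sub.
by case/andP.
Qed.

Lemma ker_eq (phi : 'M['F_2]_(3,2)) (b : 'rV['F_2]_3) :
  \rank phi = 2%N -> b != 0 -> b *m phi = 0 -> (kermx phi == b)%MS.
Proof.
move=> rp b0 bp.
have sb : (b <= kermx phi)%MS by rewrite sub_kermx bp eqxx.
have := mxrank_leqif_eq sb; rewrite rank_rV b0 mxrank_ker rp => -[_ h].
by apply/eqmxP; apply: eqmx_sym; apply/eqmxP; rewrite -h.
Qed.

Lemma ker_face (W : finType) (Lam : W -> 'rV['F_2]_3) (phi : 'M['F_2]_(3,2)) w :
  \rank phi = 2%N -> Lam w != 0 -> Lam w *m phi = 0 ->
  (kermx phi == face_mx Lam [set w])%MS.
Proof.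
move=> rp b0 bp; apply/eqmxP.
apply: eqmx_trans (eqmxP (ker_eq rp b0 bp)) (eqmx_sym (eqmxP (face_mx1 Lam w))).
Qed.

Lemma mrc (a : 'rV['F_2]_2) (b : 'M['F_2]_1) (U : 'M['F_2]_2) (d : 'rV['F_2]_2) :
  ((row_mx a b : 'rV_3) *m (col_mx U d : 'M_(3,2))) = a *m U + b *m d.
Proof. exact: (@mul_row_col _ 1 2 1 2 a b U d). Qed.

Lemma rmx0 (a : 'rV['F_2]_2) (b : 'M['F_2]_1) :
  ((row_mx a b : 'rV_3) == 0) = (a == 0) && (b == 0).
Proof. exact: (@row_mx_eq0 _ 1 2 1 a b). Qed.

Theorem lemma3 (m : nat) (hm : (3 <= m)%N) (p : 'I_m)
    (lam1 lam2 : 'I_m -> 'rV['F_2]_2) :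
  char_map (Pm m) lam1 -> char_map (Pm m) lam2 ->
  (p_adjacent (Pm m) p lam1 lam2 <-> supp lam1 p = supp lam2 p).
Proof.
move=> cm1 cm2; have m1 : (1 < m)%N by apply: leq_trans hm.
split.
  case=> Lam [cm [mu1 [pr1 dj1]] [mu2 [pr2 dj2]]].
  rewrite (DJ_supp p dj1) (DJ_supp p dj2).
  case: pr1 => phi1 [_ k1 e1]; case: pr2 => phi2 [_ k2 e2].
  have K1 := eqmx_trans (eqmxP k1) (eqmxP (face_mx1 Lam (p2 _))).
  have K2 := eqmx_trans (eqmxP k2) (eqmxP (face_mx1 Lam (p1 p))).
  apply/setP => v; rewrite !inE !e1 !e2 /iota_lk_p2 /iota_lk_p1 eqxx.
  case: (eqVneq v p) => [->|vp]; first by rewrite !eqxx.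
  rewrite -subr_eq0 -mulmxBl (ker_two _ K1) -[in RHS]subr_eq0 -mulmxBl (ker_two _ K2).
  have [w1 w2] := wedge2 vp.
  have pv : Some p != Some v by rewrite Some_eq eq_sym.
  have xa := set2_neq pv (cm _ w1).
  have xb : Lam (Some v) != Lam None.
    have := set2_neq (A := None) (B := Some v) isT (cm _ w2).
    by rewrite eq_sym.
  rewrite /p1 /p2 !mx_subE.
  have f1 : (Lam (Some v) + Lam (Some p) == 0) = false.
    by apply/negbTE; apply: contra xa => /eqP/mx_addI h; rewrite h eqxx.
  have f2 : (Lam (Some v) + Lam None == 0) = false.
    by apply/negbTE; apply: contra xb => /eqP/mx_addI h; rewrite h eqxx.
  by rewrite f1 f2 /= !add_eqF2 addrC.
move=> hS.
have nz1 := cm_nz cm1; have nz2 := cm_nz cm2.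
have [M [hM cM]] := exM (nz1 p) (nz2 p).
pose t v : 'M['F_2]_1 :=
  if v == p then 1%:M else if lam1 v *m M == lam2 v then 0 else 1%:M.
pose Lam (o : option 'I_m) : 'rV['F_2]_3 :=
  match o with Some v => row_mx (lam1 v) (t v) | None => row_mx (0 : 'rV['F_2]_2) 1%:M end.
pose phi1 : 'M['F_2]_(3,2) := col_mx (1%:M : 'M['F_2]_2) (0 : 'rV['F_2]_2).
pose phi2 : 'M['F_2]_(3,2) := col_mx M (lam2 p).
have f1 v : Lam (Some v) *m phi1 = lam1 v by rewrite /Lam /phi1 /phi2 /= mrc mulmx1 mulmx0 addr0.
have f1b : Lam None *m phi1 = 0 by rewrite /Lam /phi1 /phi2 /= mrc mulmx1 mulmx0 addr0.
have f2b : Lam None *m phi2 = lam2 p by rewrite /Lam /phi1 /phi2 /= mrc mul0mx add0r mul1mx.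
have f2a : Lam (Some p) *m phi2 = 0.
  by rewrite /Lam /phi1 /phi2 /= mrc /t eqxx mul1mx cM mx_dbl.
have inj : injective (fun x : 'rV['F_2]_2 => x *m M) := can_inj (mulmxK hM).
have f2 v : v != p -> Lam (Some v) *m phi2 = lam2 v.
  move=> vp; rewrite /Lam /phi1 /phi2 /= mrc /t (negbTE vp).
  case: eqP => [->|hne]; first by rewrite mul0mx addr0.
  rewrite mul1mx.
  have hS' : (lam1 v == lam1 p) = (lam2 v == lam2 p).
    by have := congr1 (fun S : {set 'I_m} => v \in S) hS; rewrite /supp !inE.
  case: (eqVneq (lam1 v) (lam1 p)) => e1.
    by move: hS'; rewrite e1 eqxx => /esym/eqP e2; case: hne; rewrite e1 cM e2.
  have e2 : lam2 v != lam2 p by rewrite -hS'.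
  have y0 : lam1 v *m M != 0.
    by apply: contra (nz1 v) => /eqP h; apply/eqP; apply: inj; rewrite /= h mul0mx.
  have yc : lam1 v *m M != lam2 p.
    by rewrite -cM; apply: contra e1 => /eqP/inj h; rewrite h eqxx.
  case: (F2sq_fact y0 (nz2 v) (nz2 p) yc e2) => [h|h]; first by case: hne.
  by rewrite -h addrA mx_dbl add0r.
have LN0 : Lam None != 0.
  rewrite /Lam /= rmx0 eqxx /=; apply/negP => /eqP/matrixP/(_ 0 0).
  by rewrite !mxE.
have LP0 : Lam (Some p) != 0 by rewrite /Lam /= rmx0 (negbTE (nz1 p)).
have cmL : char_map (wedge (Pm m) p) Lam.
  move=> s ws; case: (wedge_good ws) => i [hG|[hpi hpsi hH]].
    apply: (free_sub hG).
    have u : uniq [:: None; Some i; Some (ordS i)].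
      by rewrite /= !inE Some_eq (ordS_neq i m1).
    rewrite (perm_free (perm_map Lam (perm3 u))) /=.
    apply: (free3_proj (P := phi1)) => //; rewrite !f1; exact: cm_adj.
  apply: (free_sub hH).
  have u : uniq [:: Some p; Some i; Some (ordS i)].
    by rewrite /= !inE !Some_eq negb_or hpi hpsi (ordS_neq i m1).
  rewrite (perm_free (perm_map Lam (perm3 u))) /=.
  apply: (free3_proj (P := phi2)) => //.
  rewrite f2; last by rewrite eq_sym.
  rewrite f2; last by rewrite eq_sym.
  exact: cm_adj.
exists Lam; split => //.
  exists lam1; split; last by exists 1%:M; split; [exact: unitmx1| move=> v; rewrite mulmx1].
  have hr1 : \rank phi1 = 2%N by rewrite /phi1; apply: rank_col; exact: unitmx1.
  exists phi1; split; first exact: hr1.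
    by apply: (ker_face hr1).
  by move=> w; rewrite /iota_lk_p2 f1.
exists lam2; split; last by exists 1%:M; split; [exact: unitmx1| move=> v; rewrite mulmx1].
have hr2 : \rank phi2 = 2%N by rewrite /phi2; apply: rank_col; exact: hM.
exists phi2; split; first exact: hr2.
  by apply: (ker_face hr2).
move=> w; rewrite /iota_lk_p1; case: eqVneq => [->|wp]; first by rewrite f2b.
by rewrite f2.
Qed.
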